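(* Let $f,g\in\mathrm{Diffeo}^-(\mathbb{R})$ with $f(0)=g(0)=0$ and $f\circ f=g\circ g$. Suppose $0$ is an interior point of $\mathrm{fix}(f\circ f)=\{x\in\mathbb{R}: f(f(x))=x\}$. Then there exists $h\in\mathrm{Diffeo}^+(\mathbb{R})$ with $h(0)=0$, commuting with $f\circ f$, such that $T_0f=(T_0h)^{-1}\circ(T_0g)\circ(T_0h)$; and hence $f$ is conjugate to $g$ by an element of $\mathrm{Diffeo}^+(\mathbb{R})$.
   Context: $\mathrm{Diffeo}(\mathbb{R})$ is the group of $C^\infty$ diffeomorphisms of $\mathbb{R}$ under composition; $\mathrm{Diffeo}^+(\mathbb{R})$ (resp. $\mathrm{Diffeo}^-(\mathbb{R})$) is the set of orientation-preserving (resp. orientation-reversing) diffeomorphisms. For a diffeomorphism $\phi$ with $\phi(0)=0$, $T_0\phi=\phi'(0)X+\frac{\phi''(0)}{2}X^2+\cdots$ is its Taylor series at $0$, an element of the group of formally invertible real formal power series under formal composition, with $^{-1}$ the compositional inverse. *)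

(* Defs.v *)
From Stdlib Require Import Reals Lra.
From Coquelicot Require Import Coquelicot.
Open Scope R_scope.

Definition smooth (f : R -> R) : Prop := forall (n : nat) (x : R), ex_derive_n f n x.

Definition is_inverse (f finv : R -> R) : Prop :=
  (forall x, finv (f x) = x) /\ (forall x, f (finv x) = x).

Definition Diffeo (f : R -> R) : Prop :=
  smooth f /\ exists finv, smooth finv /\ is_inverse f finv.

Definition Diffeo_plus (f : R -> R) : Prop :=
  Diffeo f /\ forall x y, x < y -> f x < f y.
Definition Diffeo_minus (f : R -> R) : Prop :=
  Diffeo f /\ forall x y, x < y -> f y < f x.

(** Formal power series over R, as coefficient sequences. *)
Definition fps := nat -> R.

Definition taylor0 (phi : R -> R) : fps := fun n => Derive_n phi n 0 / INR (Factorial.fact n).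

Definition fps_mul (a b : fps) : fps :=
  fun n => sum_f_R0 (fun i => a i * b (n - i)%nat) n.
Fixpoint fps_pow (b : fps) (k : nat) : fps :=
  match k with
  | O => fun n => match n with O => 1 | S _ => 0 end
  | S k' => fps_mul b (fps_pow b k')
  end.

(** Formal composition a o b, for b with zero constant term
    (then (b^k)_n = 0 for k > n, so the sum is finite). *)
Definition fps_comp (a b : fps) : fps :=
  fun n => sum_f_R0 (fun k => a k * fps_pow b k n) n.

Definition fps_X : fps := fun n => match n with 1%nat => 1 | _ => 0 end.

(* Main.v *)
Require Import Defs.
From Stdlib Require Import Reals Lra Lia FunctionalExtensionality ClassicalEpsilon Ranalysis5.
From Coquelicot Require Import Coquelicot.
Open Scope R_scope.

Definition CD (n : nat) (u : R -> R) : Prop :=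
  forall k, (k <= n)%nat -> forall x, ex_derive_n u k x.

Lemma Dn_S u n : Derive_n u (S n) = Derive_n (Derive u) n.
Proof.
  induction n. reflexivity.
  change (Derive_n u (S (S n))) with (fun x => Derive (Derive_n u (S n)) x).
  rewrite IHn. reflexivity.
Qed.

Lemma CD_S n u : CD (S n) u <-> (forall x, ex_derive u x) /\ CD n (Derive u).
Proof.
  split.
  - intros H. split.
    + intros x. exact (H 1%nat ltac:(lia) x).
    + intros k Hk x. destruct k. exact I.
      change (ex_derive (Derive_n (Derive u) k) x).
      rewrite <- Dn_S. exact (H (S (S k)) ltac:(lia) x).
  - intros [H1 H2] k Hk x. destruct k. exact I.
    destruct k. exact (H1 x).
    change (ex_derive (Derive_n u (S k)) x).
    rewrite Dn_S. exact (H2 (S k) ltac:(lia) x).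
Qed.

Lemma CD_mono n u : CD (S n) u -> CD n u.
Proof. intros H k Hk x. apply H. lia. Qed.

Lemma CD_0 u : CD 0 u.
Proof. intros k Hk x. replace k with 0%nat by lia. exact I. Qed.

Lemma smooth_CD u : smooth u <-> forall n, CD n u.
Proof.
  split. intros H n k _ x. apply H.
  intros H n x. exact (H n n (le_n n) x).
Qed.


Lemma CD_const n c : CD n (fun _ => c).
Proof.
  revert c; induction n; intros c. apply CD_0.
  apply CD_S. split. intros; apply ex_derive_const.
  replace (Derive (fun _ => c)) with (fun _ : R => 0). apply IHn.
  apply functional_extensionality; intros x. now rewrite Derive_const.
Qed.

Lemma CD_id n : CD n (fun x => x).
Proof.
  destruct n. apply CD_0.
  apply CD_S. split. intros; apply ex_derive_id.
  replace (Derive (fun x => x)) with (fun _ : R => 1). apply CD_const.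
  apply functional_extensionality; intros x. now rewrite Derive_id.
Qed.

Lemma CD_ex n u : CD (S n) u -> forall x, ex_derive u x.
Proof. intros H; apply CD_S in H; apply H. Qed.

Lemma CD_plus n u v : CD n u -> CD n v -> CD n (fun x => u x + v x).
Proof.
  revert u v; induction n; intros u v Hu Hv. apply CD_0.
  apply CD_S in Hu; apply CD_S in Hv. destruct Hu as [Hu1 Hu2]; destruct Hv as [Hv1 Hv2].
  apply CD_S. split. intros x; exact (ex_derive_plus u v x (Hu1 x) (Hv1 x)).
  replace (Derive (fun x => u x + v x)) with (fun x => Derive u x + Derive v x). auto.
  apply functional_extensionality; intros x. now rewrite Derive_plus.
Qed.

Lemma CD_mult n u v : CD n u -> CD n v -> CD n (fun x => u x * v x).
Proof.
  revert u v; induction n; intros u v Hu Hv. apply CD_0.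
  pose proof (CD_mono _ _ Hu) as Hu'. pose proof (CD_mono _ _ Hv) as Hv'.
  apply CD_S in Hu; apply CD_S in Hv. destruct Hu as [Hu1 Hu2]; destruct Hv as [Hv1 Hv2].
  apply CD_S. split. intros; apply ex_derive_mult; auto.
  replace (Derive (fun x => u x * v x)) with (fun x => Derive u x * v x + u x * Derive v x).
  apply CD_plus; auto.
  apply functional_extensionality; intros x. now rewrite Derive_mult.
Qed.

Lemma CD_scal n c u : CD n u -> CD n (fun x => c * u x).
Proof. intros; apply CD_mult; auto using CD_const. Qed.

Lemma CD_comp n u v : CD n u -> CD n v -> CD n (fun x => u (v x)).
Proof.
  revert u v; induction n; intros u v Hu Hv. apply CD_0.
  pose proof (CD_mono _ _ Hu) as Hu'. pose proof (CD_mono _ _ Hv) as Hv'.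
  apply CD_S in Hu; apply CD_S in Hv. destruct Hu as [Hu1 Hu2]; destruct Hv as [Hv1 Hv2].
  apply CD_S. split. intros; apply ex_derive_comp; auto.
  replace (Derive (fun x => u (v x))) with (fun x => Derive v x * Derive u (v x)).
  apply CD_mult; auto.
  apply functional_extensionality; intros x. rewrite (Derive_comp u v x). reflexivity. apply Hu1. apply Hv1.
Qed.

Lemma CD_inv n w : CD n w -> (forall x, w x <> 0) -> CD n (fun x => / w x).
Proof.
  revert w; induction n; intros w Hw Hnz. apply CD_0.
  pose proof (CD_mono _ _ Hw) as Hw'.
  apply CD_S in Hw. destruct Hw as [Hw1 Hw2].
  assert (Hd : forall x, is_derive (fun y => / w y) x (- Derive w x / (w x)^2)).
  { intros x. apply is_derive_inv; auto. apply Derive_correct; auto. }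
  apply CD_S. split. intros x; eexists; apply Hd.
  replace (Derive (fun x => / w x)) with (fun x => (- 1 * Derive w x) * ((/ w x) * (/ w x))).
  apply CD_mult. apply CD_scal; auto. apply CD_mult; auto.
  apply functional_extensionality; intros x. pose proof (is_derive_unique _ _ _ (Hd x)) as E. simpl in E. rewrite E.
  field. auto.
Qed.

Lemma smooth_of n u : smooth u -> CD n u.
Proof. intros H; apply smooth_CD; auto. Qed.

Lemma cont_of_ex u x : ex_derive u x -> continuity_pt u x.
Proof. intros H. apply derivable_continuous_pt. apply ex_derive_Reals_0; auto. Qed.

Lemma inv_is_derive (u v : R -> R) :
  (forall x, ex_derive u x) -> (forall x y, x < y -> u x < u y) ->
  is_inverse u v -> (forall x, Derive u x <> 0) ->
  forall y : R, is_derive v y (/ Derive u (v y)).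
Proof.
  intros Hex Hinc [Hvu Huv] Hnz y.
  assert (vinc : forall a b, a < b -> v a < v b).
  { intros a b Hab. destruct (Rlt_le_dec (v a) (v b)) as [h|h]; auto.
    destruct h as [h|h]. apply Hinc in h. rewrite !Huv in h. lra.
    apply (f_equal u) in h. rewrite !Huv in h. lra. }
  assert (Hc : continuity_pt v y).
  { apply (continuity_pt_recip_interv u v (v y - 1) (v y + 1)).
    lra. intros; apply Hinc; lra. intros; unfold comp, id; apply Huv.
    intros x H1 H2.
    assert (vle : forall a b, a <= b -> v a <= v b).
    { intros a b [h|h]. apply Rlt_le, vinc; auto. subst; lra. }
    apply vle in H1; apply vle in H2. rewrite Hvu in H1, H2. lra.
    intros; apply cont_of_ex; auto.
    pattern y at 2 3; rewrite <- (Huv y). split; apply Hinc; lra. }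
  apply is_derive_Reals.
  assert (Prf : forall a, v (y-1) <= a <= v (y+1) -> derivable_pt u a).
  { intros; apply ex_derive_Reals_0; auto. }
  assert (Hi : v (y-1) <= v y <= v (y+1)) by (split; apply Rlt_le, vinc; lra).
  pose proof (derivable_pt_lim_recip_interv u v (y-1) (y+1) y Prf Hc
    ltac:(lra) ltac:(lra) Hi) as H.
  assert (E: derive_pt u (v y) (Prf (v y) Hi) = Derive u (v y)) by apply Derive_Reals.
  replace (/ Derive u (v y)) with (1 / derive_pt u (v y) (Prf (v y) Hi)).
  apply H. intros; unfold comp, id; apply Huv.
  rewrite E; auto.
  rewrite E; field; auto.
Qed.

Lemma inv_smooth (u v : R -> R) :
  smooth u -> (forall x y, x < y -> u x < u y) ->
  is_inverse u v -> (forall x, Derive u x <> 0) -> smooth v.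
Proof.
  intros Hs Hinc Hi Hnz.
  assert (Hex : forall x, ex_derive u x) by (intros x; exact (Hs 1%nat x)).
  pose proof (inv_is_derive u v Hex Hinc Hi Hnz) as Hd.
  apply smooth_CD. intros n; induction n. apply CD_0.
  apply CD_S. split. intros y; eexists; apply Hd.
  replace (Derive v) with (fun y => / Derive u (v y)).
  apply CD_inv. apply CD_comp; auto. 
  pose proof (smooth_of (S n) u Hs) as H; apply CD_S in H; apply H.
  auto.
  apply functional_extensionality; intros y. symmetry; apply is_derive_unique; auto.
Qed.

Lemma smooth_D u : smooth u -> smooth (Derive u).
Proof. intros H. apply smooth_CD; intros n. pose proof (smooth_of (S n) u H) as H1.
  apply CD_S in H1; apply H1. Qed.
Lemma smooth_ex u : smooth u -> forall x, ex_derive u x.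
Proof. intros H x; exact (H 1%nat x). Qed.
Lemma smooth_const c : smooth (fun _ => c).
Proof. apply smooth_CD; intros; apply CD_const. Qed.
Lemma smooth_id : smooth (fun x => x).
Proof. apply smooth_CD; intros; apply CD_id. Qed.
Lemma smooth_plus u v : smooth u -> smooth v -> smooth (fun x => u x + v x).
Proof. intros; apply smooth_CD; intros; apply CD_plus; apply smooth_of; auto. Qed.
Lemma smooth_mult u v : smooth u -> smooth v -> smooth (fun x => u x * v x).
Proof. intros; apply smooth_CD; intros; apply CD_mult; apply smooth_of; auto. Qed.
Lemma smooth_scal c u : smooth u -> smooth (fun x => c * u x).
Proof. intros; apply smooth_mult; auto using smooth_const. Qed.
Lemma smooth_comp u v : smooth u -> smooth v -> smooth (fun x => u (v x)).
Proof. intros; apply smooth_CD; intros; apply CD_comp; apply smooth_of; auto. Qed.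
Lemma smooth_inv w : smooth w -> (forall x, w x <> 0) -> smooth (fun x => / w x).
Proof. intros; apply smooth_CD; intros; apply CD_inv; auto; apply smooth_of; auto. Qed.
Lemma smooth_pow u k : smooth u -> smooth (fun x => u x ^ k).
Proof. intros H; induction k; simpl. apply smooth_const. apply smooth_mult; auto. Qed.

Lemma Derive_n_plus' u v n : smooth u -> smooth v ->
  Derive_n (fun x => u x + v x) n 0 = Derive_n u n 0 + Derive_n v n 0.
Proof. intros Hu Hv. apply Derive_n_plus; apply filter_forall; intros; apply Hu || apply Hv. Qed.

Lemma T_plus u v n : smooth u -> smooth v ->
  taylor0 (fun x => u x + v x) n = taylor0 u n + taylor0 v n.
Proof. intros; unfold taylor0; rewrite Derive_n_plus'; auto. field. apply INR_fact_neq_0. Qed.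

Lemma T_scal c u n : taylor0 (fun x => c * u x) n = c * taylor0 u n.
Proof. unfold taylor0. rewrite Derive_n_scal_l. field. apply INR_fact_neq_0. Qed.

Lemma T_const c n : taylor0 (fun _ => c) n = match n with O => c | S _ => 0 end.
Proof. unfold taylor0. destruct n. simpl; field. rewrite Derive_n_const. field. apply INR_fact_neq_0. Qed.

Lemma T_id : taylor0 (fun x => x) = fps_X.
Proof. apply functional_extensionality; intros n. unfold taylor0, fps_X.
  destruct n. simpl; field. rewrite Dn_S.
  replace (Derive (fun x => x)) with (fun _ : R => 1).
  destruct n. simpl. field. rewrite Derive_n_const. field. apply INR_fact_neq_0.
  apply functional_extensionality; intros; now rewrite Derive_id. Qed.

Lemma T_D u n : taylor0 (Derive u) n = INR (S n) * taylor0 u (S n).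
Proof. unfold taylor0. rewrite Dn_S. rewrite fact_simpl, mult_INR.
  field. split. apply INR_fact_neq_0. apply not_0_INR; lia. Qed.

Lemma T_ext u v : (exists e, 0 < e /\ forall x, Rabs x < e -> u x = v x) -> taylor0 u = taylor0 v.
Proof. intros [e [He H]]. apply functional_extensionality; intros n. unfold taylor0.
  f_equal. apply Derive_n_ext_loc. exists (mkposreal e He). intros y Hy.
  apply H. unfold ball in Hy; simpl in Hy. unfold AbsRing_ball, abs, minus, plus, opp in Hy; simpl in Hy.
  replace y with (y + - 0) by ring. auto. Qed.

Definition Dser (U : fps) : fps := fun n => INR (S n) * U (S n).

Lemma fps_mul_D U V n :
  INR (S n) * fps_mul U V (S n) = fps_mul (Dser U) V n + fps_mul U (Dser V) n.
Proof.
  unfold fps_mul, Dser.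
  rewrite scal_sum.
  transitivity (sum_f_R0 (fun i => INR i * (U i * V (S n - i)%nat)) (S n) +
                sum_f_R0 (fun i => INR (S n - i) * (U i * V (S n - i)%nat)) (S n)).
  { rewrite <- plus_sum. apply sum_eq; intros i Hi. rewrite <- Rmult_plus_distr_r.
    rewrite <- plus_INR. replace (i + (S n - i))%nat with (S n) by lia. ring. }
  f_equal.
  - rewrite decomp_sum by lia. simpl pred. simpl (INR 0). rewrite Rmult_0_l, Rplus_0_l.
    apply sum_eq; intros i Hi. replace (S n - S i)%nat with (n - i)%nat by lia. ring.
  - rewrite tech5. replace (S n - S n)%nat with 0%nat by lia. simpl (INR 0).
    rewrite Rmult_0_l, Rplus_0_r.
    apply sum_eq; intros i Hi. replace (S n - i)%nat with (S (n - i)) by lia. ring.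
Qed.

Lemma fps_mul_ext U V U' V' n : (forall i, (i <= n)%nat -> U i = U' i) ->
  (forall i, (i <= n)%nat -> V i = V' i) -> fps_mul U V n = fps_mul U' V' n.
Proof. intros H1 H2; unfold fps_mul; apply sum_eq; intros i Hi. rewrite H1, H2 by lia. auto. Qed.

Lemma Derive_mult_fun u v : smooth u -> smooth v ->
  Derive (fun x => u x * v x) = (fun x => Derive u x * v x + u x * Derive v x).
Proof. intros; apply functional_extensionality; intros; apply Derive_mult; apply smooth_ex; auto. Qed.

Lemma T_mult n : forall u v, smooth u -> smooth v ->
  taylor0 (fun x => u x * v x) n = fps_mul (taylor0 u) (taylor0 v) n.
Proof.
  induction n; intros u v Hu Hv.
  - unfold taylor0, fps_mul; simpl; field.
  - apply (Rmult_eq_reg_l (INR (S n))); [| apply not_0_INR; lia].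
    rewrite <- T_D. rewrite fps_mul_D.
    rewrite Derive_mult_fun by auto.
    rewrite T_plus by (apply smooth_mult; auto using smooth_D).
    rewrite !IHn by auto using smooth_D.
    f_equal; apply fps_mul_ext; intros; try reflexivity; apply T_D.
Qed.

Lemma T_pow u k : smooth u -> taylor0 (fun x => u x ^ k) = fps_pow (taylor0 u) k.
Proof.
  intros Hu; induction k; apply functional_extensionality; intros n.
  - simpl. rewrite T_const. reflexivity.
  - simpl. rewrite T_mult by auto using smooth_pow. rewrite IHk. reflexivity.
Qed.

Lemma sum_zero f n : (forall i, (i <= n)%nat -> f i = 0) -> sum_f_R0 f n = 0.
Proof. induction n; intros H; simpl. apply H; lia. rewrite IHn. rewrite (H (S n)). ring. lia. intros; apply H; lia. Qed.

Lemma sum_single f n m : (m <= n)%nat -> (forall i, (i <= n)%nat -> i <> m -> f i = 0) ->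
  sum_f_R0 f n = f m.
Proof.
  induction n; intros Hm H; simpl.
  - replace m with 0%nat by lia; auto.
  - destruct (Nat.eq_dec m (S n)).
    + subst. rewrite sum_zero. ring. intros; apply H; lia.
    + rewrite IHn by (lia || (intros; apply H; lia)). rewrite (H (S n)) by lia. ring.
Qed.

Lemma fps_mul_X U j : fps_mul fps_X U j = match j with O => 0 | S j' => U j' end.
Proof.
  unfold fps_mul. destruct j. simpl. unfold fps_X. ring.
  rewrite (sum_single _ _ 1) by (lia || (intros i Hi Hne; unfold fps_X; destruct i as [|[|i]]; try lia; ring)).
  unfold fps_X. replace (S j - 1)%nat with j by lia. ring.
Qed.

Lemma fps_pow_X k j : fps_pow fps_X k j = if Nat.eqb k j then 1 else 0.
Proof.
  revert j; induction k; intros j.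
  - destruct j; reflexivity.
  - simpl. rewrite fps_mul_X. destruct j. reflexivity. apply IHk.
Qed.

Lemma smooth_sum (c : nat -> R) (h : nat -> R -> R) n :
  (forall k, smooth (h k)) -> smooth (fun x => sum_f_R0 (fun k => c k * h k x) n).
Proof. intros H; induction n; simpl. apply smooth_scal; auto. apply smooth_plus; auto. apply smooth_scal; auto. Qed.

Lemma T_sum (c : nat -> R) (h : nat -> R -> R) n j :
  (forall k, smooth (h k)) ->
  taylor0 (fun x => sum_f_R0 (fun k => c k * h k x) n) j = sum_f_R0 (fun k => c k * taylor0 (h k) j) n.
Proof.
  intros H; induction n; simpl. apply T_scal.
  rewrite T_plus. rewrite IHn, T_scal. reflexivity.
  apply smooth_sum; auto. apply smooth_scal; auto.
Qed.

Lemma flat_comp b : smooth b -> b 0 = 0 -> forall N r, smooth r ->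
  (forall j, (j <= N)%nat -> taylor0 r j = 0) ->
  forall j, (j <= N)%nat -> taylor0 (fun x => r (b x)) j = 0.
Proof.
  intros Hb Hb0 N. induction N; intros r Hr Hz j Hj.
  - replace j with 0%nat by lia. pose proof (Hz 0%nat (le_n 0)) as H0.
    unfold taylor0 in *; simpl in *. rewrite Hb0. auto.
  - destruct j. pose proof (Hz 0%nat ltac:(lia)) as H0.
    unfold taylor0 in *; simpl in *. rewrite Hb0. auto.
    apply (Rmult_eq_reg_l (INR (S j))); [| apply not_0_INR; lia]. rewrite Rmult_0_r.
    rewrite <- T_D.
    replace (Derive (fun x => r (b x))) with (fun x => Derive b x * Derive r (b x)).
    rewrite T_mult by (auto using smooth_D, smooth_comp).
    unfold fps_mul. apply sum_zero. intros i Hi.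
    rewrite IHN; auto using smooth_D. ring. 
    intros k Hk. rewrite T_D. rewrite Hz by lia. ring. lia.
    apply functional_extensionality; intros x. rewrite (Derive_comp r b x); auto using smooth_ex.
Qed.

Theorem T_comp a b : smooth a -> smooth b -> b 0 = 0 ->
  taylor0 (fun x => a (b x)) = fps_comp (taylor0 a) (taylor0 b).
Proof.
  intros Ha Hb Hb0. apply functional_extensionality; intros n.
  set (c := taylor0 a).
  set (P := fun x => sum_f_R0 (fun k => c k * (fun k x => x ^ k) k x) n).
  assert (HP : smooth P) by (apply smooth_sum; intros; apply smooth_pow, smooth_id).
  set (r := fun x => a x + (-1) * P x).
  assert (Hr : smooth r) by (apply smooth_plus; auto; apply smooth_scal; auto).
  assert (E : (fun x => a (b x)) = fun x => P (b x) + r (b x)).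
  { apply functional_extensionality; intros x; unfold r; ring. }
  rewrite E. rewrite T_plus by (apply smooth_comp; auto).
  rewrite (flat_comp b Hb Hb0 n r Hr).
  - rewrite Rplus_0_r. unfold P.
    rewrite (T_sum c (fun k x => b x ^ k)) by (intros; apply smooth_pow; auto).
    unfold fps_comp. apply sum_eq; intros k Hk. rewrite T_pow by auto. reflexivity.
  - intros j Hj. unfold r. rewrite T_plus by (auto; apply smooth_scal; auto).
    rewrite T_scal. unfold P. rewrite T_sum by (intros; apply smooth_pow, smooth_id).
    rewrite (sum_single _ _ j Hj).
    + rewrite T_pow by apply smooth_id. rewrite T_id, fps_pow_X, Nat.eqb_refl. unfold c; ring.
    + intros i Hi Hne. rewrite T_pow by apply smooth_id. rewrite T_id, fps_pow_X.
      apply Nat.eqb_neq in Hne. rewrite Hne. ring.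
  - lia.
Qed.

Lemma mono_lim k eps : 0 < eps -> exists M, 0 < M /\ forall t, M < t -> t ^ k * exp (- t) < eps.
Proof.
  intros He. set (F := INR (Factorial.fact (S k))).
  assert (HF : 0 < F) by (apply INR_fact_lt_0).
  exists (F / eps + 1). split. assert (0 < F/eps) by (apply Rdiv_lt_0_compat; auto). lra.
  intros t Ht. assert (Ht0 : 0 < t). { assert (0 < F/eps) by (apply Rdiv_lt_0_compat; auto). lra. }
  assert (Hexp : t ^ S k / F <= exp t).
  { eapply Rle_trans; [| apply (exp_ge_taylor t (S k)); lra].
    rewrite tech5. unfold F. assert (0 <= sum_f_R0 (fun j => t ^ j / INR (Factorial.fact j)) k).
    apply cond_pos_sum. intros j. apply Rdiv_le_0_compat. apply pow_le; lra. apply INR_fact_lt_0. lra. }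
  rewrite exp_Ropp.
  assert (Hp : 0 < t ^ k) by (apply pow_lt; auto).
  assert (He' : 0 < exp t) by apply exp_pos.
  apply (Rmult_lt_reg_r (exp t)); auto. rewrite Rmult_assoc, Rinv_l by lra. rewrite Rmult_1_r.
  apply Rlt_le_trans with (eps * (t ^ S k / F)).
  - simpl. replace (eps * (t * t ^ k / F)) with (t ^ k * (eps * t / F)) by (field; lra).
    rewrite <- (Rmult_1_r (t ^ k)) at 1. apply Rmult_lt_compat_l; auto.
    apply (Rmult_lt_reg_r F); auto. unfold Rdiv. rewrite Rmult_assoc, Rinv_l by lra.
    rewrite Rmult_1_r, Rmult_1_l.
    assert (F / eps < t) by lra. apply (Rmult_lt_compat_l eps) in H; auto.
    unfold Rdiv in H. rewrite <- Rmult_assoc, (Rmult_comm eps F), Rmult_assoc, Rinv_r in H by lra. lra.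
  - apply Rmult_le_compat_l; lra.
Qed.

Inductive poly : (R -> R) -> Prop :=
| pc c : poly (fun _ => c)
| padd p q : poly p -> poly q -> poly (fun t => p t + q t)
| pmul p : poly p -> poly (fun t => t * p t).

Lemma poly_deriv p : poly p -> exists p', poly p' /\ forall t, is_derive p t (p' t).
Proof.
  induction 1.
  - exists (fun _ => 0). split. constructor. intros t; exact (is_derive_const c t).
  - destruct IHpoly1 as [p' [H1 H2]]; destruct IHpoly2 as [q' [H3 H4]].
    exists (fun t => p' t + q' t). split. constructor; auto. intros t. exact (is_derive_plus p q t _ _ (H2 t) (H4 t)).
  - destruct IHpoly as [p' [H1 H2]]. exists (fun t => p t + t * p' t). split.
    constructor; auto. constructor; auto.
    intros t. pose proof (is_derive_mult (fun t => t) p t 1 (p' t) (is_derive_id t) (H2 t)) as K.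
    simpl in K. replace (p t + t * p' t) with (1 * p t + t * p' t) by ring. apply K.
    intros; apply Rmult_comm.
Qed.

Lemma poly_lim p : poly p -> forall k eps, 0 < eps ->
  exists M, 0 < M /\ forall t, M < t -> Rabs (t ^ k * p t * exp (- t)) < eps.
Proof.
  induction 1; intros k eps He.
  - assert (Hc : 0 < Rabs c + 1) by (pose proof (Rabs_pos c); lra).
    destruct (mono_lim k (eps / (Rabs c + 1))) as [M [HM H]]. apply Rdiv_lt_0_compat; auto.
    exists M. split; auto. intros t Ht. specialize (H t Ht).
    assert (0 <= t ^ k * exp (- t)). { apply Rmult_le_pos. apply pow_le; lra. left; apply exp_pos. }
    replace (t ^ k * c * exp (- t)) with (c * (t ^ k * exp (- t))) by ring.
    rewrite Rabs_mult, (Rabs_pos_eq (t ^ k * exp (- t))) by auto.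
    apply Rle_lt_trans with (Rabs c * (eps / (Rabs c + 1))).
    apply Rmult_le_compat_l. apply Rabs_pos. lra.
    apply (Rmult_lt_reg_r (Rabs c + 1)); auto. unfold Rdiv.
    replace (Rabs c * (eps * / (Rabs c + 1)) * (Rabs c + 1)) with (Rabs c * eps) by (field; lra).
    nra.
  - destruct (IHpoly1 k (eps/2)) as [M1 [H1 K1]]. lra.
    destruct (IHpoly2 k (eps/2)) as [M2 [H2 K2]]. lra.
    exists (Rmax M1 M2). split. apply Rlt_le_trans with M1; auto. apply Rmax_l.
    intros t Ht. specialize (K1 t ltac:(pose proof (Rmax_l M1 M2); lra)).
    specialize (K2 t ltac:(pose proof (Rmax_r M1 M2); lra)).
    replace (t ^ k * (p t + q t) * exp (- t)) with (t ^ k * p t * exp (- t) + t ^ k * q t * exp (- t)) by ring.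
    eapply Rle_lt_trans. apply Rabs_triang. lra.
  - destruct (IHpoly (S k) eps He) as [M [HM K]]. exists M. split; auto.
    intros t Ht. specialize (K t Ht). simpl in K.
    replace (t ^ k * (t * p t) * exp (- t)) with (t * t ^ k * p t * exp (- t)) by ring. auto.
Qed.

Lemma poly_scal c p : poly p -> poly (fun t => c * p t).
Proof.
  induction 1.
  - apply pc.
  - replace (fun t => c * (p t + q t)) with (fun t => c * p t + c * q t).
    constructor; auto. apply functional_extensionality; intros; ring.
  - replace (fun t => c * (t * p t)) with (fun t => t * (c * p t)).
    constructor; auto. apply functional_extensionality; intros; ring.
Qed.

Definition G (q : R -> R) (x : R) : R := if Rlt_dec 0 x then q (/ x) * exp (- / x) else 0.

Lemma locally_pos x : 0 < x -> locally x (fun y => 0 < y).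
Proof. intros H. exists (mkposreal x H). intros y Hy. unfold ball in Hy; simpl in Hy.
  unfold AbsRing_ball, abs, minus, plus, opp in Hy; simpl in Hy. apply Rabs_def2 in Hy. lra. Qed.
Lemma locally_neg x : x < 0 -> locally x (fun y => y < 0).
Proof. intros H. assert (0 < -x) by lra. exists (mkposreal (-x) H0). intros y Hy. unfold ball in Hy; simpl in Hy.
  unfold AbsRing_ball, abs, minus, plus, opp in Hy; simpl in Hy. apply Rabs_def2 in Hy. lra. Qed.

Lemma G_deriv q : poly q -> exists q2, poly q2 /\ forall x, is_derive (G q) x (G q2 x).
Proof.
  intros Hq. destruct (poly_deriv q Hq) as [q' [Hq' Hd]].
  exists (fun t => t * (t * (q t + (-1) * q' t))). split.
  { constructor. constructor. constructor; auto. apply poly_scal; auto. }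
  intros x. destruct (Rtotal_order x 0) as [Hx|[Hx|Hx]].
  - apply is_derive_ext_loc with (f := fun _ => 0).
    eapply filter_imp. 2: apply locally_neg; eauto. intros y Hy. unfold G.
    destruct (Rlt_dec 0 y); auto; lra.
    unfold G. destruct (Rlt_dec 0 x); try lra. exact (is_derive_const 0 x).
  - subst x. unfold G at 2. destruct (Rlt_dec 0 0); try lra.
    apply is_derive_Reals. intros eps He.
    destruct (poly_lim q Hq 1 eps He) as [M [HM K]].
    assert (Hd0 : 0 < / M) by (apply Rinv_0_lt_compat; auto).
    exists (mkposreal (/ M) Hd0). intros h Hh Hhd. simpl in Hhd.
    rewrite Rplus_0_l. unfold G. destruct (Rlt_dec 0 0); try lra.
    destruct (Rlt_dec 0 h).
    + specialize (K (/ h)). rewrite Rabs_pos_eq in Hhd by lra.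
      assert (M < / h). { rewrite <- (Rinv_inv M). apply Rinv_lt_contravar; auto. nra. }
      specialize (K H). replace ((q (/ h) * exp (- / h) - 0) / h - 0) with ((/ h) ^ 1 * q (/ h) * exp (- / h)) by (field; lra).
      auto.
    + replace ((0 - 0) / h - 0) with 0 by (field; auto). rewrite Rabs_R0; auto.
  - apply is_derive_ext_loc with (f := fun y => q (/ y) * exp (- / y)).
    eapply filter_imp. 2: apply locally_pos; eauto. intros y Hy. unfold G.
    destruct (Rlt_dec 0 y); auto; lra.
    unfold G. destruct (Rlt_dec 0 x); try lra.
    assert (H1 : is_derive (fun y => q (/ y)) x (- / x ^ 2 * q' (/ x))).
    { pose proof (is_derive_comp q Rinv x (q' (/ x)) (- / x ^ 2) (Hd (/ x))) as K.
      apply K. assert (E: - / x ^ 2 = - (1) / x ^ 2) by (field; lra). rewrite E.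
      apply (is_derive_inv (fun y => y) x 1). exact (is_derive_id x). lra. }
    assert (H2 : is_derive (fun y => exp (- / y)) x (exp (- / x) * (/ x ^ 2))).
    { auto_derive. lra. field. lra. }
    pose proof (is_derive_mult _ _ x _ _ H1 H2) as K. 
    replace (x ^ 0) with 1 in * by (simpl; ring).
    replace (/ x * (/ x * (q (/ x) + -1 * q' (/ x))) * exp (- / x)) with
      (- / x ^ 2 * q' (/ x) * exp (- / x) + q (/ x) * (exp (- / x) * / x ^ 2)) by (field; lra).
    apply K. intros; apply Rmult_comm.
Qed.

Lemma G_CD n : forall q, poly q -> CD n (G q).
Proof.
  induction n; intros q Hq. apply CD_0.
  destruct (G_deriv q Hq) as [q2 [Hq2 Hd]].
  apply CD_S. split. intros x; eexists; apply Hd.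
  replace (Derive (G q)) with (G q2). auto.
  apply functional_extensionality; intros x. symmetry; apply is_derive_unique; auto.
Qed.

Definition ee (x : R) : R := G (fun _ => 1) x.

Lemma ee_smooth : smooth ee.
Proof. apply smooth_CD; intros n. apply G_CD. constructor. Qed.

Lemma ee_pos x : 0 < x -> 0 < ee x.
Proof. intros H; unfold ee, G. destruct (Rlt_dec 0 x); try lra. rewrite Rmult_1_l; apply exp_pos. Qed.
Lemma ee_zero x : x <= 0 -> ee x = 0.
Proof. intros H; unfold ee, G. destruct (Rlt_dec 0 x); try lra. Qed.
Lemma ee_nonneg x : 0 <= ee x.
Proof. destruct (Rlt_dec 0 x). left; apply ee_pos; auto. rewrite ee_zero; lra. Qed.

Definition bump (t : R) : R := ee t * / (ee t + ee (1 - t)).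

Lemma bump_den_pos t : 0 < ee t + ee (1 - t).
Proof. destruct (Rlt_dec 0 t). pose proof (ee_pos t r); pose proof (ee_nonneg (1-t)); lra.
  pose proof (ee_pos (1 - t) ltac:(lra)); pose proof (ee_nonneg t); lra. Qed.

Lemma bump_smooth : smooth bump.
Proof.
  unfold bump. apply smooth_mult. apply ee_smooth.
  apply smooth_inv. apply smooth_plus. apply ee_smooth.
  apply (smooth_comp ee (fun t => 1 - t)). apply ee_smooth.
  replace (fun t => 1 - t) with (fun t => 1 + (-1) * t). apply smooth_plus. apply smooth_const.
  apply smooth_scal, smooth_id. apply functional_extensionality; intros; ring.
  intros t; pose proof (bump_den_pos t); lra.
Qed.

Lemma bump_0 t : t <= 0 -> bump t = 0.
Proof. intros H; unfold bump; rewrite ee_zero by auto; ring. Qed.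
Lemma bump_1 t : 1 <= t -> bump t = 1.
Proof. intros H; unfold bump. rewrite (ee_zero (1 - t)) by lra. rewrite Rplus_0_r.
  apply Rinv_r. pose proof (ee_pos t ltac:(lra)); lra. Qed.
Lemma bump_range t : 0 <= bump t <= 1.
Proof. unfold bump. pose proof (bump_den_pos t). pose proof (ee_nonneg t). pose proof (ee_nonneg (1-t)).
  split. apply Rmult_le_pos; auto. left; apply Rinv_0_lt_compat; auto.
  apply (Rmult_le_reg_r (ee t + ee (1 - t))); auto. rewrite Rmult_assoc, Rinv_l by lra. lra. Qed.

Lemma smooth_cont u : smooth u -> forall x, continuity_pt u x.
Proof. intros H x. apply cont_of_ex, smooth_ex; auto. Qed.

Lemma smooth_continuity u : smooth u -> continuity u.
Proof. intros H x. apply smooth_cont; auto. Qed.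

Lemma deriv_nonpos u x l : (forall a b, a < b -> u b < u a) -> is_derive u x l -> l <= 0.
Proof.
  intros Hd H. apply is_derive_Reals in H. destruct (Rle_dec l 0); auto. exfalso.
  destruct (H (l/2) ltac:(lra)) as [d Hd0].
  assert (0 < d) by apply cond_pos.
  specialize (Hd0 (d/2) ltac:(lra) ltac:(rewrite Rabs_pos_eq; lra)).
  pose proof (Hd x (x + d/2) ltac:(lra)).
  apply Rabs_def2 in Hd0. destruct Hd0 as [_ Hd0].
  assert ((u (x + d / 2) - u x) / (d / 2) < 0).
  { unfold Rdiv. apply Rmult_neg_pos. lra. apply Rinv_0_lt_compat; lra. }
  lra.
Qed.

Lemma deriv_nonneg u x l : (forall a b, a < b -> u a < u b) -> is_derive u x l -> 0 <= l.
Proof.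
  intros Hd H. assert (- l <= 0); [|lra].
  apply (deriv_nonpos (fun y => - u y) x). intros a b Hab; specialize (Hd a b Hab); lra.
  exact (is_derive_opp u x l H).
Qed.

Lemma incr_of_pos u : smooth u -> (forall x, 0 < Derive u x) -> forall x y, x < y -> u x < u y.
Proof.
  intros Hs Hp x y Hxy.
  set (pr := fun t => ex_derive_Reals_0 u t (smooth_ex u Hs t)).
  apply (derive_increasing_interv (x - 1) (y + 1) u pr); try lra.
  intros t _. unfold pr. rewrite Derive_Reals. auto.
Qed.

Lemma mk_inverse u : smooth u -> (forall x y, x < y -> u x < u y) ->
  (forall y, exists a b, u a < y < u b) -> (forall x, 0 < Derive u x) ->
  exists v, smooth v /\ is_inverse u v.
Proof.
  intros Hs Hi Hsur Hp.
  assert (Hex : forall y, exists x, u x = y).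
  { intros y. destruct (Hsur y) as [a [b [H1 H2]]].
    assert (a < b). { destruct (Rlt_dec a b); auto. exfalso.
      destruct (Rle_lt_or_eq_dec b a) as [h|h]. lra. apply Hi in h; lra. subst; lra. }
    destruct (IVT (fun x => u x - y) a b) as [z [_ Hz]]; auto.
    apply continuity_minus. apply smooth_continuity; auto. apply continuity_const. intros ? ?; auto.
    lra. lra. exists z; lra. }
  set (v := fun y => proj1_sig (constructive_indefinite_description _ (Hex y))).
  assert (Huv : forall y, u (v y) = y).
  { intros y; unfold v. destruct (constructive_indefinite_description _ (Hex y)); auto. }
  assert (Hvu : forall x, v (u x) = x).
  { intros x. destruct (Rtotal_order (v (u x)) x) as [h|[h|h]]; auto; apply Hi in h; rewrite Huv in h; lra. }
  exists v. split.
  - apply (inv_smooth u v); auto. split; auto. intros x; specialize (Hp x); lra.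
  - split; auto.
Qed.

Lemma inverse_incr u v : (forall x y, x < y -> u x < u y) -> is_inverse u v -> forall x y, x < y -> v x < v y.
Proof. intros Hi [H1 H2] x y Hxy. destruct (Rtotal_order (v x) (v y)) as [h|[h|h]]; auto.
  apply (f_equal u) in h. rewrite !H2 in h. lra. apply Hi in h; rewrite !H2 in h; lra. Qed.
Lemma inverse_decr u v : (forall x y, x < y -> u y < u x) -> is_inverse u v -> forall x y, x < y -> v y < v x.
Proof. intros Hi [H1 H2] x y Hxy. destruct (Rtotal_order (v x) (v y)) as [h|[h|h]]; auto.
  apply Hi in h; rewrite !H2 in h; lra.
  apply (f_equal u) in h. rewrite !H2 in h. lra. Qed.

Lemma is_inverse_sym u v : is_inverse u v -> is_inverse v u.
Proof. intros [H1 H2]; split; auto. Qed.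

Lemma smooth_is_derive u x : smooth u -> is_derive u x (Derive u x).
Proof. intros H; apply Derive_correct, smooth_ex; auto. Qed.

Definition phi (u : R -> R) (x : R) : R := (x - u x) / 2.

Lemma phi_smooth u : smooth u -> smooth (phi u).
Proof. intros H. unfold phi.
  replace (fun x => (x - u x) / 2) with (fun x => (/2) * x + (- /2) * u x).
  apply smooth_plus; apply smooth_scal; auto using smooth_id.
  apply functional_extensionality; intros; field. Qed.

Lemma phi_derive u x : smooth u -> is_derive (phi u) x ((1 - Derive u x) / 2).
Proof. intros H. unfold phi.
  pose proof (smooth_is_derive u x H) as K.
  auto_derive. exists (Derive u x); exact K. change (Derive (fun x0 => u x0) x) with (Derive u x). lra. Qed.

Lemma phi_props u : smooth u -> (forall a b, a < b -> u b < u a) -> u 0 = 0 ->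
  exists v, smooth v /\ is_inverse (phi u) v /\ (forall x, 0 < Derive (phi u) x)
    /\ (forall x y, x < y -> phi u x < phi u y).
Proof.
  intros Hs Hd H0.
  assert (Hp : forall x, 0 < Derive (phi u) x).
  { intros x. rewrite (is_derive_unique _ _ _ (phi_derive u x Hs)).
    pose proof (deriv_nonpos u x _ Hd (smooth_is_derive u x Hs)). lra. }
  assert (Hi : forall x y, x < y -> phi u x < phi u y).
  { intros x y Hxy. unfold phi. pose proof (Hd x y Hxy). lra. }
  destruct (mk_inverse (phi u)) as [v [Hv Hinv]]; auto.
  apply phi_smooth; auto.
  intros y. exists (- 2 * Rabs y - 1), (2 * Rabs y + 1). unfold phi.
  pose proof (Hd (- 2 * Rabs y - 1) 0 ltac:(pose proof (Rabs_pos y); lra)).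
  pose proof (Hd 0 (2 * Rabs y + 1) ltac:(pose proof (Rabs_pos y); lra)).
  pose proof (Rle_abs y). pose proof (Rle_abs (-y)). pose proof (Rabs_Ropp y). lra.
  exists v; auto.
Qed.

Lemma deriv0_m1 u eps : smooth u -> (forall a b, a < b -> u b < u a) -> u 0 = 0 -> 0 < eps ->
  (forall x, Rabs x < eps -> u (u x) = x) -> Derive u 0 = -1.
Proof.
  intros Hs Hd H0 He Hf.
  pose proof (is_derive_comp u u 0 _ _ (smooth_is_derive u (u 0) Hs) (smooth_is_derive u 0 Hs)) as K.
  assert (K2 : is_derive (fun x => u (u x)) 0 1).
  { apply is_derive_ext_loc with (f := fun x => x). exists (mkposreal eps He).
    intros y Hy. symmetry. apply Hf. unfold ball in Hy; simpl in Hy.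
    unfold AbsRing_ball, abs, minus, plus, opp in Hy; simpl in Hy. replace y with (y + - 0) by ring; auto.
    exact (is_derive_id 0). }
  pose proof (is_derive_unique _ _ _ K) as E1. pose proof (is_derive_unique _ _ _ K2) as E2.
  rewrite E2 in E1. simpl in E1. rewrite H0 in E1.
  pose proof (deriv_nonpos u 0 _ Hd (smooth_is_derive u 0 Hs)). unfold mult in E1; simpl in E1. change (scal (Derive u 0) (Derive u 0)) with (Derive u 0 * Derive u 0) in E1. nra.
Qed.

Lemma phi_conj u x : u (u x) = x -> phi u (u x) = - phi u x.
Proof. intros H; unfold phi; rewrite H; field. Qed.

Lemma ell_exists f g eps : Diffeo_minus f -> Diffeo_minus g -> f 0 = 0 -> g 0 = 0 ->
  (forall x, f (f x) = g (g x)) -> 0 < eps -> (forall x, Rabs x < eps -> f (f x) = x) ->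
  exists l, smooth l /\ l 0 = 0 /\ Derive l 0 = 1 /\
    forall x, Rabs x < eps -> Rabs (l x) < eps -> l (f x) = g (l x).
Proof.
  intros [[Hfs _] Hfd] [[Hgs _] Hgd] Hf0 Hg0 Hfg He Hfix.
  assert (Hgfix : forall x, Rabs x < eps -> g (g x) = x) by (intros; rewrite <- Hfg; auto).
  destruct (phi_props f Hfs Hfd Hf0) as [pfi [Hpfi [Ipf [Pf If]]]].
  destruct (phi_props g Hgs Hgd Hg0) as [pgi [Hpgi [Ipg [Pg Ig]]]].
  exists (fun x => pgi (phi f x)). split; [|split; [|split]].
  - apply smooth_comp; auto. apply phi_smooth; auto.
  - unfold phi. rewrite Hf0. replace ((0 - 0) / 2) with 0 by field.
    destruct Ipg as [K1 K2]. specialize (K1 0). unfold phi in K1. rewrite Hg0 in K1.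
    replace ((0 - 0) / 2) with 0 in K1 by field. auto.
  - rewrite Derive_comp. 2: apply smooth_ex; auto. 2: apply smooth_ex, phi_smooth; auto.
    rewrite (is_derive_unique _ _ _ (phi_derive f 0 Hfs)).
    rewrite (is_derive_unique _ _ _ (inv_is_derive (phi g) pgi (smooth_ex _ (phi_smooth g Hgs)) Ig Ipg
      ltac:(intros x; specialize (Pg x); lra) _)).
    assert (E0 : phi f 0 = 0) by (unfold phi; rewrite Hf0; field).
    assert (E1 : pgi 0 = 0). { destruct Ipg as [K1 K2]. specialize (K1 0). unfold phi in K1.
      rewrite Hg0 in K1. replace ((0 - 0) / 2) with 0 in K1 by field. auto. }
    rewrite E0, E1. rewrite (is_derive_unique _ _ _ (phi_derive g 0 Hgs)).
    rewrite (deriv0_m1 f eps), (deriv0_m1 g eps); auto. field.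
  - intros x Hx Hlx. set (y := pgi (phi f x)) in *.
    assert (Hy : phi g y = phi f x) by (unfold y; destruct Ipg as [K1 K2]; apply K2).
    assert (E : phi g (g y) = phi f (f x)).
    { rewrite phi_conj by auto. rewrite phi_conj by auto. rewrite Hy. auto. }
    destruct Ipg as [K1 K2]. rewrite <- E. rewrite K1. auto.
Qed.

Lemma cont_eps u x0 : continuity_pt u x0 -> forall e, 0 < e ->
  exists d, 0 < d /\ forall x, Rabs (x - x0) < d -> Rabs (u x - u x0) < e.
Proof.
  intros H e He. destruct (H e He) as [d [Hd K]]. exists d. split; auto.
  intros x Hx. destruct (Req_dec x x0). subst. rewrite Rminus_diag, Rabs_R0; auto.
  apply (K x). split. split. exact I. auto. auto.
Qed.

Lemma psi_exists l eps : smooth l -> l 0 = 0 -> Derive l 0 = 1 -> 0 < eps ->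
  exists d psi, 0 < d /\ d < eps / 2 /\ smooth psi /\ (forall x, 0 < Derive psi x) /\
    (forall x, d <= Rabs x -> psi x = x) /\ (forall x, Rabs x <= d / 2 -> psi x = l x).
Proof.
  intros Hl Hl0 Hl1 He.
  destruct (continuity_ab_maj (fun s => Rabs (Derive bump s)) (-1) 1) as [Mx [HMx _]]. lra.
  { intros c _. apply (continuity_pt_comp (Derive bump) Rabs). apply smooth_cont, smooth_D, bump_smooth.
    apply Rcontinuity_abs. }
  set (C := Rabs (Derive bump Mx)).
  assert (HC : 0 <= C) by apply Rabs_pos.
  set (eta := / (2 * (1 + 3 * C))).
  assert (Heta : 0 < eta) by (apply Rinv_0_lt_compat; lra).
  assert (Heta2 : (1 + 3 * C) * eta = / 2) by (unfold eta; field; lra).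
  destruct (cont_eps (Derive l) 0 (smooth_cont _ (smooth_D _ Hl) 0) eta Heta) as [d0 [Hd0 Kd]].
  rewrite Hl1 in Kd.
  set (d := Rmin (d0 / 2) (eps / 4)).
  assert (Hd : 0 < d) by (apply Rmin_pos; lra).
  assert (Hdd0 : d < d0) by (unfold d; pose proof (Rmin_l (d0/2) (eps/4)); lra).
  assert (Hde : d < eps / 2) by (unfold d; pose proof (Rmin_r (d0/2) (eps/4)); lra).
  set (a := 4 / (3 * (d * d))).
  assert (Ha : 0 < a) by (unfold a; apply Rdiv_lt_0_compat; nra).
  set (s := fun x => a * (x * x) + (- / 3)).
  set (psi := fun x => x + (1 - bump (s x)) * (l x - x)).
  assert (Hs1 : forall x, d <= Rabs x -> 1 <= s x).
  { intros x Hx. unfold s. assert (d * d <= x * x).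
    { replace (x * x) with (Rabs x * Rabs x). nra. rewrite <- Rabs_mult. apply Rabs_pos_eq. nra. }
    assert (a * (d * d) = 4 / 3) by (unfold a; field; lra). nra. }
  assert (Hs0 : forall x, Rabs x <= d / 2 -> s x <= 0).
  { intros x Hx. unfold s. assert (x * x <= d * d / 4).
    { replace (x * x) with (Rabs x * Rabs x). pose proof (Rabs_pos x). nra.
      rewrite <- Rabs_mult. apply Rabs_pos_eq. nra. }
    assert (a * (d * d) = 4 / 3) by (unfold a; field; lra). nra. }
  assert (Hpsi_id : forall x, d <= Rabs x -> psi x = x).
  { intros x Hx. unfold psi. rewrite bump_1 by auto. ring. }
  assert (Hpsi_l : forall x, Rabs x <= d / 2 -> psi x = l x).
  { intros x Hx. unfold psi. rewrite bump_0 by auto. ring. }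
  assert (Hss : smooth s).
  { unfold s. apply smooth_plus. apply smooth_scal. apply smooth_mult; apply smooth_id. apply smooth_const. }
  assert (Hsmooth : smooth psi).
  { unfold psi. apply smooth_plus. apply smooth_id. apply smooth_mult.
    replace (fun x => 1 - bump (s x)) with (fun x => 1 + (-1) * bump (s x)).
    apply smooth_plus. apply smooth_const. apply smooth_scal. apply smooth_comp; auto. apply bump_smooth.
    apply functional_extensionality; intros; ring.
    replace (fun x => l x - x) with (fun x => l x + (-1) * x).
    apply smooth_plus; auto. apply smooth_scal, smooth_id.
    apply functional_extensionality; intros; ring. }
  exists d, psi. split; [auto|split; [auto|split; [auto|split; [|split; auto]]]].
  intros x. destruct (Rle_lt_dec (Rabs x) d) as [Hx|Hx].
  -
    assert (Hder : is_derive psi x (1 + (- Derive bump (s x) * (2 * a * x)) * (l x - x) +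
                (1 - bump (s x)) * (Derive l x - 1))).
    { unfold psi, s. auto_derive. split. apply (smooth_ex bump bump_smooth). split; auto.
      apply (smooth_ex l Hl).
      change (Derive (fun x0 => bump x0)) with (Derive bump).
      change (Derive (fun x0 => l x0)) with (Derive l). ring. }
    rewrite (is_derive_unique _ _ _ Hder).
    assert (Hsr : -1 <= s x <= 1).
    { unfold s. assert (x * x <= d * d).
      { replace (x * x) with (Rabs x * Rabs x). pose proof (Rabs_pos x). nra.
        rewrite <- Rabs_mult. apply Rabs_pos_eq. nra. }
      assert (a * (d * d) = 4 / 3) by (unfold a; field; lra).
      assert (0 <= x * x) by nra. nra. }
    assert (HB : Rabs (Derive bump (s x)) <= C) by (apply HMx; auto).
    assert (Hlx : Rabs (l x - x) <= eta * Rabs x).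
    { destruct (MVT_abs (fun t => l t - t) (fun t => Derive l t - 1) 0 x) as [c [Hc1 Hc2]].
      { intros c _. apply is_derive_Reals.
        pose proof (smooth_is_derive l c Hl) as K.
        pose proof (is_derive_minus l (fun t => t) c _ _ K (is_derive_id c)) as K2. exact K2. }
      simpl in Hc1. rewrite Hl0 in Hc1. replace (l x - x - (0 - 0)) with (l x - x) in Hc1 by ring.
      rewrite Hc1. replace (x - 0) with x by ring.
      apply Rmult_le_compat_r. apply Rabs_pos. left. 
      assert (Rabs c <= Rabs x).
      { unfold Rmin, Rmax in Hc2. destruct (Rle_dec 0 x); apply Rabs_le; 
        pose proof (Rle_abs x); pose proof (Rle_abs (-x)); rewrite Rabs_Ropp in *; lra. }
      apply Kd. rewrite Rminus_0_r. lra. }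
    assert (Hl1x : Rabs (Derive l x - 1) < eta).
    { apply Kd. rewrite Rminus_0_r. lra. }
    pose proof (bump_range (s x)) as Hbr.
    set (B := Derive bump (s x)) in *.
    set (L := l x - x) in *.
    set (D := Derive l x - 1) in *.
    set (bs := bump (s x)) in *.
    assert (T1 : Rabs (- B * (2 * a * x) * L) <= 8 / 3 * C * eta).
    { rewrite !Rabs_mult, Rabs_Ropp. rewrite (Rabs_pos_eq 2) by lra. rewrite (Rabs_pos_eq a) by lra.
      assert (Rabs x * Rabs x <= d * d).
      { pose proof (Rabs_pos x). nra. }
      assert (a * (d * d) = 4 / 3) by (unfold a; field; lra).
      pose proof (Rabs_pos x). pose proof (Rabs_pos B). pose proof (Rabs_pos L).
      apply Rle_trans with (C * (2 * a * Rabs x) * (eta * Rabs x)).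
      apply Rmult_le_compat. apply Rmult_le_pos; nra. auto. apply Rmult_le_compat_r; nra. auto.
      replace (C * (2 * a * Rabs x) * (eta * Rabs x)) with (2 * C * eta * (a * (Rabs x * Rabs x))) by ring.
      assert (0 <= C * eta) by nra. assert (a * (Rabs x * Rabs x) <= 4/3). { rewrite <- H0. apply Rmult_le_compat_l; lra. } nra. }
    assert (T2 : - eta <= (1 - bs) * D).
    { apply Rabs_def2 in Hl1x. nra. }
    assert (- (8 / 3 * C * eta) <= - B * (2 * a * x) * L).
    { pose proof (Rle_abs (- (- B * (2 * a * x) * L))). rewrite Rabs_Ropp in H. lra. }
    nra.
  - assert (Hloc : locally x (fun y => y = psi y)).
    { exists (mkposreal (Rabs x - d) ltac:(lra)). intros y Hy. symmetry. apply Hpsi_id.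
      unfold ball in Hy; simpl in Hy. unfold AbsRing_ball, abs, minus, plus, opp in Hy; simpl in Hy.
      pose proof (Rabs_triang_inv x y). pose proof (Rabs_minus_sym y x).
      replace (x - y) with (-(y + - x)) in H by ring. rewrite Rabs_Ropp in H. lra. }
    rewrite (is_derive_unique psi x 1). lra.
    apply (is_derive_ext_loc (fun y => y)). auto. exact (is_derive_id x).
Qed.

Lemma ball_abs (x : R) (r : posreal) y : ball x r y -> Rabs (y - x) < r.
Proof. unfold ball; simpl. unfold AbsRing_ball, abs, minus, plus, opp; simpl. auto. Qed.

Lemma smooth_local (k : R -> R) :
  (forall x, exists v r, smooth v /\ 0 < r /\ forall y, Rabs (y - x) < r -> k y = v y) -> smooth k.
Proof.
  intros H n x. destruct (H x) as [v [r [Hv [Hr K]]]].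
  apply (ex_derive_n_ext_loc v k). exists (mkposreal r Hr); intros y Hy. symmetry; apply K.
  apply ball_abs in Hy; auto. apply Hv.
Qed.

Lemma incr_le u : (forall x y, x < y -> u x < u y) -> forall x y, x <= y -> u x <= u y.
Proof. intros H x y [h|h]. left; auto. subst; lra. Qed.
Lemma decr_le u : (forall x y, x < y -> u y < u x) -> forall x y, x <= y -> u y <= u x.
Proof. intros H x y [h|h]. left; auto. subst; lra. Qed.

Lemma inv0 u v : is_inverse u v -> u 0 = 0 -> v 0 = 0.
Proof. intros [H1 H2] H. rewrite <- H at 1. auto. Qed.

Theorem theorem4p1 (f g : R -> R) :
  Diffeo_minus f -> Diffeo_minus g ->
  f 0 = 0 -> g 0 = 0 ->
  (forall x, f (f x) = g (g x)) ->
  (exists eps, 0 < eps /\ forall x, Rabs x < eps -> f (f x) = x) ->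
  (exists h : R -> R,
      Diffeo_plus h /\ h 0 = 0 /\
      (forall x, h (f (f x)) = f (f (h x))) /\
      exists Hinv : fps,
        fps_comp Hinv (taylor0 h) = fps_X /\
        fps_comp (taylor0 h) Hinv = fps_X /\
        taylor0 f = fps_comp Hinv (fps_comp (taylor0 g) (taylor0 h)))
  /\
  (exists k kinv : R -> R,
      Diffeo_plus k /\ is_inverse k kinv /\
      forall x, f x = kinv (g (k x))).
Proof.
  intros Hf Hg Hf0 Hg0 Hfg [eps [He Hfix]].
  destruct (ell_exists f g eps Hf Hg Hf0 Hg0 Hfg He Hfix) as [l [Hl [Hl0 [Hl1 Hconj]]]].
  destruct Hf as [[Hfs [finv [Hfinvs Hfinv]]] Hfd].
  destruct Hg as [[Hgs [ginv [Hginvs Hginv]]] Hgd].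
  destruct (psi_exists l eps Hl Hl0 Hl1 He) as [d [h [Hd [Hde [Hhs [Hhp [Hhid Hhl]]]]]]].
  assert (Hhi : forall x y, x < y -> h x < h y) by (apply incr_of_pos; auto).
  destruct (mk_inverse h Hhs Hhi) as [hinv [Hhinvs Hhinv]]; auto.
  { intros y. exists (- Rabs y - d - 1), (Rabs y + d + 1).
    pose proof (Rabs_pos y).
    rewrite (Hhid (- Rabs y - d - 1)) by (rewrite Rabs_left; lra).
    rewrite (Hhid (Rabs y + d + 1)) by (rewrite Rabs_pos_eq; lra).
    pose proof (Rle_abs y). pose proof (Rle_abs (-y)). pose proof (Rabs_Ropp y). lra. }
  assert (Hh0 : h 0 = 0). { rewrite Hhl. auto. rewrite Rabs_R0; lra. }
  assert (Hhinv0 : hinv 0 = 0) by (apply (inv0 h); auto).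
  assert (Hhb : forall x, Rabs x <= d -> Rabs (h x) <= d).
  { intros x Hx. apply Rabs_le. apply Rabs_le_between in Hx.
    pose proof (incr_le h Hhi (-d) x ltac:(lra)). pose proof (incr_le h Hhi x d ltac:(lra)).
    rewrite (Hhid (-d)) in H by (rewrite Rabs_Ropp, Rabs_pos_eq; lra).
    rewrite (Hhid d) in H0 by (rewrite Rabs_pos_eq; lra). lra. }
  destruct (cont_eps f 0 (smooth_cont f Hfs 0) (d / 2) ltac:(lra)) as [r [Hr Kr]].
  set (rho := Rmin r (d / 2)).
  assert (Hrho : 0 < rho) by (apply Rmin_pos; lra).
  assert (Hloc : forall x, Rabs x < rho -> h (f x) = g (h x)).
  { intros x Hx. assert (Hx1 : Rabs x < r) by (pose proof (Rmin_l r (d/2)); unfold rho in Hx; lra).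
    assert (Hx2 : Rabs x <= d / 2) by (pose proof (Rmin_r r (d/2)); unfold rho in Hx; lra).
    specialize (Kr x ltac:(rewrite Rminus_0_r; auto)). rewrite Hf0, Rminus_0_r in Kr.
    rewrite (Hhl (f x)) by lra. rewrite (Hhl x) by lra.
    apply Hconj. lra. rewrite <- Hhl by lra. pose proof (Hhb x ltac:(lra)). lra. }
  assert (HFinc : forall x y, x < y -> f (f x) < f (f y)) by (intros x y Hxy; apply Hfd, Hfd; auto).
  assert (Hcomm : forall x, h (f (f x)) = f (f (h x))).
  { intros x. destruct (Rlt_le_dec (Rabs x) eps) as [Hx|Hx].
    - rewrite Hfix by auto. rewrite Hfix; auto.
      destruct (Rle_lt_dec (Rabs x) d). pose proof (Hhb x r0). lra. rewrite Hhid; lra.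
    - rewrite (Hhid x) by lra. apply Hhid.
      destruct (Rle_lt_dec 0 x).
      + rewrite Rabs_pos_eq in Hx by lra. pose proof (HFinc (eps/2) x ltac:(lra)).
        rewrite (Hfix (eps/2)) in H by (rewrite Rabs_pos_eq; lra).
        rewrite Rabs_pos_eq; lra.
      + rewrite Rabs_left in Hx by lra. pose proof (HFinc x (-(eps/2)) ltac:(lra)).
        rewrite (Hfix (-(eps/2))) in H by (rewrite Rabs_Ropp, Rabs_pos_eq; lra).
        rewrite Rabs_left; lra. }
  split.
  - exists h. split; [split; [split; auto; exists hinv; auto | auto] |].
    split; auto. split; auto.
    exists (taylor0 hinv). split; [|split].
    + rewrite <- T_comp by auto. replace (fun x => hinv (h x)) with (fun x : R => x).
      apply T_id. apply functional_extensionality; intros; symmetry; apply Hhinv.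
    + rewrite <- T_comp by auto. replace (fun x => h (hinv x)) with (fun x : R => x).
      apply T_id. apply functional_extensionality; intros; symmetry; apply Hhinv.
    + rewrite <- (T_comp g h) by auto. rewrite <- (T_comp hinv (fun x => g (h x))).
      2: auto. 2: apply smooth_comp; auto. 2: rewrite Hh0; auto.
      apply T_ext. exists rho. split; auto. intros x Hx. rewrite <- Hloc by auto.
      symmetry; apply Hhinv.
  -
    set (k := fun x => if Rle_dec 0 x then h x else ginv (h (f x))).
    set (kinv := fun y => if Rle_dec 0 y then hinv y else finv (hinv (g y))).
    assert (Hginv0 : ginv 0 = 0) by (apply (inv0 g); auto).
    assert (Hfinv0 : finv 0 = 0) by (apply (inv0 f); auto).
    pose proof (inverse_decr g ginv Hgd Hginv) as Hginvd.
    pose proof (inverse_decr f finv Hfd Hfinv) as Hfinvd.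
    pose proof (inverse_incr h hinv Hhi Hhinv) as Hhinvi.
    assert (Sh : forall x, 0 <= x -> 0 <= h x) by (intros; rewrite <- Hh0; apply incr_le; auto).
    assert (Sh' : forall x, 0 < x -> 0 < h x) by (intros; rewrite <- Hh0; apply Hhi; auto).
    assert (Shn : forall x, x < 0 -> h x < 0) by (intros; rewrite <- Hh0; apply Hhi; auto).
    assert (Shi : forall x, 0 <= x -> 0 <= hinv x) by (intros; rewrite <- Hhinv0; apply incr_le; auto).
    assert (Shin : forall x, x < 0 -> hinv x < 0) by (intros; rewrite <- Hhinv0; apply Hhinvi; auto).
    assert (Sf : forall x, x < 0 -> 0 < f x) by (intros; rewrite <- Hf0; apply Hfd; auto).
    assert (Sfp : forall x, 0 < x -> f x < 0) by (intros; rewrite <- Hf0; apply Hfd; auto).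
    assert (Sg : forall x, x < 0 -> 0 < g x) by (intros; rewrite <- Hg0; apply Hgd; auto).
    assert (Sgp : forall x, 0 < x -> g x < 0) by (intros; rewrite <- Hg0; apply Hgd; auto).
    assert (Sgi : forall x, 0 < x -> ginv x < 0) by (intros; rewrite <- Hginv0; apply Hginvd; auto).
    assert (Sfi : forall x, 0 < x -> finv x < 0) by (intros; rewrite <- Hfinv0; apply Hfinvd; auto).
    destruct Hfinv as [Ef1 Ef2]. destruct Hginv as [Eg1 Eg2]. destruct Hhinv as [Eh1 Eh2].
    assert (Hkk : is_inverse k kinv).
    { split.
      - intros x. unfold k, kinv. destruct (Rle_dec 0 x).
        + destruct (Rle_dec 0 (h x)). apply Eh1. exfalso; pose proof (Sh x r0); lra.
        + destruct (Rle_dec 0 (ginv (h (f x)))).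
          exfalso. pose proof (Sgi _ (Sh' _ (Sf x ltac:(lra)))). lra.
          rewrite Eg2, Eh1, Ef1. auto.
      - intros y. unfold k, kinv. destruct (Rle_dec 0 y).
        + destruct (Rle_dec 0 (hinv y)). apply Eh2. exfalso; pose proof (Shi y r0); lra.
        + destruct (Rle_dec 0 (finv (hinv (g y)))).
          exfalso.
          assert (Hpos : 0 < hinv (g y)). { destruct (Rle_lt_or_eq_dec 0 (hinv (g y))). apply Shi. pose proof (Sg y ltac:(lra)); lra. auto.
            exfalso. apply (f_equal h) in e. rewrite Eh2, Hh0 in e. pose proof (Sg y ltac:(lra)); lra. }
          pose proof (Sfi _ Hpos). lra.
          rewrite Ef2, Eh2, Eg1. auto. }
    exists k, kinv. split; [|split; auto].
    + split; [split|].
      * apply smooth_local. intros x. destruct (Rlt_dec (- rho) x).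
        -- exists h, (x + rho). split; auto. split. lra. intros y Hy. unfold k.
           destruct (Rle_dec 0 y); auto. rewrite Hloc. rewrite Eg1; auto.
           apply Rabs_def2 in Hy. rewrite Rabs_left; lra.
        -- exists (fun y => ginv (h (f y))), rho. split. apply smooth_comp; auto. apply smooth_comp; auto.
           split; auto. intros y Hy. unfold k. apply Rabs_def2 in Hy.
           destruct (Rle_dec 0 y); auto. lra.
      * exists kinv. split; auto.
        destruct (cont_eps hinv 0 (smooth_cont hinv Hhinvs 0) rho Hrho) as [r2 [Hr2 Kr2]].
        rewrite Hhinv0 in Kr2.
        apply smooth_local. intros y. destruct (Rlt_dec (- r2) y).
        -- exists hinv, (y + r2). split; auto. split. lra. intros z Hz. unfold kinv.
           destruct (Rle_dec 0 z); auto. apply Rabs_def2 in Hz.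
           assert (Hz2 : Rabs (hinv z) < rho).
           { specialize (Kr2 z). rewrite !Rminus_0_r in Kr2. apply Kr2. rewrite Rabs_left; lra. }
           pose proof (Hloc _ Hz2) as K. rewrite Eh2 in K. rewrite <- K, Eh1, Ef1. auto.
        -- exists (fun z => finv (hinv (g z))), r2. split. apply smooth_comp; auto. apply smooth_comp; auto.
           split; auto. intros z Hz. unfold kinv. apply Rabs_def2 in Hz.
           destruct (Rle_dec 0 z); auto. lra.
      * intros x y Hxy. unfold k. destruct (Rle_dec 0 x), (Rle_dec 0 y).
        -- apply Hhi; auto.
        -- lra.
        -- pose proof (Sgi _ (Sh' _ (Sf x ltac:(lra)))). pose proof (Sh y r0). lra.
        -- apply Hginvd. apply Hhi. apply Hfd. auto.
    + intros x. unfold k, kinv. destruct (Rle_dec 0 x).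
      * destruct (Rle_dec 0 (g (h x))).
        -- destruct r0. pose proof (Sgp _ (Sh' x H)). lra.
           subst x. rewrite Hh0, Hg0, Hhinv0, Hf0. auto.
        -- rewrite <- Hfg. rewrite <- Hcomm. rewrite Eh1. rewrite Ef1. auto.
      * destruct (Rle_dec 0 (g (ginv (h (f x))))).
        -- rewrite Eg2, Eh1. auto.
        -- exfalso. rewrite Eg2 in n0. pose proof (Sh' _ (Sf x ltac:(lra))). lra.
Qed.
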